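(* Let $\Delta(v)=\alpha v+\beta$ with $\alpha,\beta\in\mathbb{R}$ such that $\Delta(v)>0$ for all $v\in[0,1]$, and let $u:[0,1]\to[0,1]$ be the power-law schedule with exponent $p=3/2$: $u(0)=0$, $u(1)=1$, $u'(s)=c\,\Delta^{3/2}(u(s))$ with $c=\int_0^1\Delta^{-3/2}(v)\,dv$. Then $\mathrm{sgn}(u'')$ is constant on $[0,1]$ and $u$ satisfies the Euler–Lagrange equation of $\mathcal{L}_1(s,u,p,q)=|q|/\Delta^2(u)$, namely for all $s\in[0,1]$ $$-\frac{2|u''(s)|\,\Delta'(u(s))}{\Delta^3(u(s))}+\frac{d^2}{ds^2}\left(\frac{\mathrm{sgn}(u''(s))}{\Delta^2(u(s))}\right)=0 .$$
   Context: $\mathrm{sgn}$ denotes the sign function with $\mathrm{sgn}(0)=0$; $\Delta'=d\Delta/dv$. The equation displayed is $\frac{\partial\mathcal{L}_1}{\partial u}-\frac{d}{ds}\frac{\partial \mathcal{L}_1}{\partial p}+\frac{d^2}{ds^2}\frac{\partial\mathcal{L}_1}{\partial q}=0$ evaluated along $(s,u(s),u'(s),u''(s))$, with $\partial|q|/\partial q=\mathrm{sgn}(q)$. *)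

(* Defs.v *)
From Stdlib Require Import Reals.
From Coquelicot Require Import Coquelicot.
Open Scope R_scope.

Definition DeltaL (alpha beta v : R) : R := alpha * v + beta.

Definition sgn (x : R) : R :=
  if Rlt_dec 0 x then 1 else if Rlt_dec x 0 then -1 else 0.

Definition I01 (x : R) : Prop := 0 <= x <= 1.

(* f has derivative l at x relative to the domain [0,1]
   (one-sided at the endpoints 0 and 1). *)
Definition deriv01 (f : R -> R) (x l : R) : Prop :=
  filterlim (fun y => (f y - f x) / (y - x))
    (within (fun y => I01 y /\ y <> x) (locally x)) (locally l).

Definition c_const (alpha beta : R) : R :=
  RInt (fun v => Rpower (DeltaL alpha beta v) (-(3/2))) 0 1.

(* Main.v *)
Require Import Defs.
From Stdlib Require Import Reals Lra Psatz.
From Coquelicot Require Import Coquelicot.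
Open Scope R_scope.

Definition ED (f : R -> R) (x l : R) : Prop :=
  forall eps, 0 < eps -> exists delta, 0 < delta /\ forall y, I01 y -> y <> x ->
    Rabs (y - x) < delta -> Rabs ((f y - f x) / (y - x) - l) < eps.

Lemma deriv01_ED f x l : deriv01 f x l <-> ED f x l.
Proof.
split.
- intros H eps He.
  destruct (H (fun z => Rabs (z - l) < eps)) as [d Hd].
  { exists (mkposreal eps He). intros z Hz. exact Hz. }
  exists d. split; [apply cond_pos|]. intros y Hy Hyx Hd'.
  apply Hd; [exact Hd'| split; assumption].
- intros H P [e He].
  destruct (H e (cond_pos e)) as [d [Hd Hy]].
  exists (mkposreal d Hd). intros y Hb [Hi Hne]. apply He.
  apply Hy; assumption.
Qed.

Lemma dpow a b p c v : 0 < a*v+b ->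
  derivable_pt_lim (fun v => c * Rpower (a*v+b) p) v (c*(p*Rpower(a*v+b)(p-1))*a).
Proof.
intros H. apply is_derive_Reals.
assert (Hp := proj2 (is_derive_Reals _ _ _) (derivable_pt_lim_power _ p H)).
auto_derive.
- eexists; exact Hp.
- rewrite (is_derive_unique _ _ _ Hp); ring.
Qed.

Lemma ED_ext f g x l : I01 x -> (forall y, I01 y -> f y = g y) -> ED f x l -> ED g x l.
Proof.
intros Hx Hfg H eps He. destruct (H eps He) as [d [Hd Hy]]. exists d; split; auto.
intros y Hy1 Hy2 Hy3. rewrite <- !Hfg; auto.
Qed.

Lemma ED_val f x l l' : l = l' -> ED f x l -> ED f x l'.
Proof. intros ->; auto. Qed.

Lemma ED_chain u F x l d : ED u x l -> derivable_pt_lim F (u x) d ->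
  ED (fun r => F (u r)) x (d * l).
Proof.
intros Hu HF eps He.
set (eta := Rmin 1 (eps / (Rabs d + Rabs l + 2))).
assert (Heta : 0 < eta).
{ unfold eta. apply Rmin_pos; [lra|]. apply Rdiv_lt_0_compat; auto.
  pose proof (Rabs_pos d); pose proof (Rabs_pos l); lra. }
assert (Heta1 : eta <= 1) by apply Rmin_l.
assert (Heta2 : eta * (Rabs d + Rabs l + 2) <= eps).
{ unfold eta. pose proof (Rabs_pos d); pose proof (Rabs_pos l).
  apply Rle_trans with (eps / (Rabs d + Rabs l + 2) * (Rabs d + Rabs l + 2)).
  apply Rmult_le_compat_r; [lra| apply Rmin_r]. right; field; lra. }
destruct (Hu eta Heta) as [d1 [Hd1 H1]].
destruct (HF eta Heta) as [d2 H2].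
set (d3 := Rmin d1 (d2 / (Rabs l + 1))).
assert (Hd3 : 0 < d3).
{ unfold d3. apply Rmin_pos; auto. apply Rdiv_lt_0_compat; [apply cond_pos|].
  pose proof (Rabs_pos l); lra. }
exists d3; split; auto.
intros y Hy Hyx Hyd.
assert (Hh : y - x <> 0) by lra.
assert (Hyd1 : Rabs (y - x) < d1) by (eapply Rlt_le_trans; [exact Hyd| apply Rmin_l]).
assert (Hyd2 : Rabs (y - x) < d2 / (Rabs l + 1))
  by (eapply Rlt_le_trans; [exact Hyd| apply Rmin_r]).
specialize (H1 y Hy Hyx Hyd1).
set (q := (u y - u x) / (y - x)) in *.
set (s := q - l) in *.
assert (Hq : u y - u x = (l + s) * (y - x)) by (unfold s, q; field; auto).
pose proof (Rabs_pos l). pose proof (Rabs_pos d).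
destruct (Req_dec (u y - u x) 0) as [Hz|Hz].
- replace ((F (u y) - F (u x)) / (y - x) - d * l) with (- (d * l)).
  2:{ replace (u y) with (u x) by lra. field; auto. }
  assert (Hl : l + s = 0).
  { rewrite Hz in Hq. symmetry in Hq. apply Rmult_integral in Hq. destruct Hq; auto. lra. }
  rewrite Rabs_Ropp, Rabs_mult.
  replace l with (- s) by lra. rewrite Rabs_Ropp.
  assert (Rabs d * Rabs s <= Rabs d * eta) by (apply Rmult_le_compat_l; lra).
  assert (eta * (Rabs d + Rabs l + 2) > eta * Rabs d) by nra.
  lra.
- set (k := u y - u x) in *.
  assert (Hk : Rabs k < d2).
  { rewrite Hq, Rabs_mult.
    assert (Rabs (l + s) <= Rabs l + 1) by
      (eapply Rle_trans; [apply Rabs_triang| lra]).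
    apply Rle_lt_trans with ((Rabs l + 1) * Rabs (y - x)).
    apply Rmult_le_compat_r; [apply Rabs_pos| lra].
    apply Rlt_le_trans with ((Rabs l + 1) * (d2 / (Rabs l + 1))).
    apply Rmult_lt_compat_l; lra.
    right; field; lra. }
  specialize (H2 k Hz Hk).
  replace (u x + k) with (u y) in H2 by (unfold k; ring).
  set (r := (F (u y) - F (u x)) / k - d) in *.
  replace ((F (u y) - F (u x)) / (y - x) - d * l) with (d * s + r * l + r * s).
  2:{ unfold r, s, q. fold k. field. split; auto. }
  eapply Rle_lt_trans; [apply Rabs_triang|].
  eapply Rle_lt_trans; [apply Rplus_le_compat_r, Rabs_triang|].
  rewrite !Rabs_mult.
  pose proof (Rabs_pos r); pose proof (Rabs_pos s).
  assert (Rabs d * Rabs s <= Rabs d * eta) by (apply Rmult_le_compat_l; lra).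
  assert (Rabs r * Rabs l <= eta * Rabs l) by (apply Rmult_le_compat_r; lra).
  assert (Rabs r * Rabs s <= eta * eta) by (apply Rmult_le_compat; lra).
  assert (eta * eta <= eta * 1) by (apply Rmult_le_compat_l; lra).
  assert (eta * (Rabs d + Rabs l + 2) = eta * Rabs d + eta * Rabs l + 2 * eta) by ring.
  lra.
Qed.

Lemma sgn_mul_pos a p : 0 < p -> sgn (a * p) = sgn a.
Proof.
intros Hp. unfold sgn.
destruct (Rlt_dec 0 (a*p)); destruct (Rlt_dec 0 a); try reflexivity.
- exfalso. destruct (Rlt_dec a 0); nra.
- exfalso; nra.
- destruct (Rlt_dec (a*p) 0); destruct (Rlt_dec a 0); try reflexivity; exfalso; nra.
Qed.

Lemma sgn_abs a : sgn a * a = Rabs a.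
Proof.
unfold sgn. destruct (Rlt_dec 0 a).
- rewrite Rabs_pos_eq; lra.
- destruct (Rlt_dec a 0).
  + rewrite Rabs_left; lra.
  + replace a with 0 by lra. rewrite Rabs_R0; ring.
Qed.

Lemma pw_comb x a b e : a + b = e -> Rpower x a * Rpower x b = Rpower x e.
Proof. intros <-. rewrite Rpower_plus. reflexivity. Qed.

Theorem theorem6 (alpha beta : R) (u u1 : R -> R) :
  (forall v, I01 v -> 0 < DeltaL alpha beta v) ->
  (forall s, I01 s -> I01 (u s)) ->
  u 0 = 0 -> u 1 = 1 ->
  (forall s, I01 s -> deriv01 u s (u1 s)) ->
  (forall s, I01 s ->
     u1 s = c_const alpha beta * Rpower (DeltaL alpha beta (u s)) (3/2)) ->
  exists u2 : R -> R,
    (forall s, I01 s -> deriv01 u1 s (u2 s)) /\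
    (forall s t, I01 s -> I01 t -> sgn (u2 s) = sgn (u2 t)) /\
    exists g1 g2 : R -> R,
      (forall s, I01 s ->
         deriv01 (fun r => sgn (u2 r) / (DeltaL alpha beta (u r)) ^ 2) s (g1 s)) /\
      (forall s, I01 s -> deriv01 g1 s (g2 s)) /\
      (forall s, I01 s ->
         - (2 * Rabs (u2 s) * alpha) / (DeltaL alpha beta (u s)) ^ 3 + g2 s = 0).
Proof.
intros HD HU _ _ Hd Hu1.
unfold DeltaL in *.
set (c := c_const alpha beta) in *.
assert (HDu : forall s, I01 s -> 0 < alpha * u s + beta) by (intros; apply HD, HU; auto).
set (m := 3/2 * c^2 * alpha).
set (k := sgn m).
exists (fun s => m * (alpha * u s + beta)^2).
split.
{ intros s Hs. apply deriv01_ED.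
  apply ED_ext with (f := fun r => c * Rpower (alpha * u r + beta) (3/2)); auto.
  { intros y Hy. rewrite Hu1; auto. }
  apply ED_val with (c*(3/2*Rpower(alpha * u s + beta)(3/2-1))*alpha * u1 s).
  { rewrite Hu1; auto.
    replace (c * (3 / 2 * Rpower (alpha * u s + beta) (3 / 2 - 1)) * alpha *
      (c * Rpower (alpha * u s + beta) (3 / 2))) with
      (m * (Rpower (alpha * u s + beta) (3 / 2 - 1) * Rpower (alpha * u s + beta) (3 / 2)))
      by (unfold m; ring).
    rewrite (pw_comb _ _ _ (INR 2)) by (simpl; lra).
    rewrite Rpower_pow by auto. reflexivity. }
  apply (ED_chain u (fun v => c * Rpower (alpha * v + beta) (3/2))).
  apply (proj1 (deriv01_ED _ _ _)), Hd; auto. apply dpow; auto. }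
split.
{ intros s t Hs Ht. rewrite !sgn_mul_pos; auto; apply pow_lt; auto. }
exists (fun s => -2*k*alpha*c * Rpower (alpha * u s + beta) (-(3/2))).
exists (fun s => 3*k*alpha^2*c^2 / (alpha * u s + beta)).
split; [|split].
- intros s Hs. apply deriv01_ED.
  apply ED_ext with (f := fun r => k * Rpower (alpha * u r + beta) (-2)); auto.
  { intros y Hy. rewrite sgn_mul_pos by (apply pow_lt; auto). fold k.
    replace (-2) with (- INR 2) by (simpl; lra). rewrite Rpower_Ropp.
    rewrite Rpower_pow by auto. reflexivity. }
  apply ED_val with (k*(-2*Rpower(alpha * u s + beta)(-2-1))*alpha * u1 s).
  { rewrite Hu1; auto.
    replace (k * (-2 * Rpower (alpha * u s + beta) (-2 - 1)) * alpha *
      (c * Rpower (alpha * u s + beta) (3 / 2))) with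
      (-2*k*alpha*c * (Rpower (alpha * u s + beta) (-2 - 1) * Rpower (alpha * u s + beta) (3 / 2)))
      by ring.
    rewrite (pw_comb _ _ _ (-(3/2))) by lra. reflexivity. }
  apply (ED_chain u (fun v => k * Rpower (alpha * v + beta) (-2))).
  apply (proj1 (deriv01_ED _ _ _)), Hd; auto. apply dpow; auto.
- intros s Hs. apply deriv01_ED.
  apply ED_val with ((-2*k*alpha*c)*(-(3/2)*Rpower(alpha * u s + beta)(-(3/2)-1))*alpha * u1 s).
  { rewrite Hu1; auto.
    replace ((-2*k*alpha*c)*(-(3/2)*Rpower(alpha * u s + beta)(-(3/2)-1))*alpha *
      (c * Rpower (alpha * u s + beta) (3 / 2))) with
      (3*k*alpha^2*c^2 * (Rpower (alpha * u s + beta) (-(3/2) - 1) * Rpower (alpha * u s + beta) (3 / 2)))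
      by field.
    rewrite (pw_comb _ _ _ (-(1))) by lra.
    rewrite Rpower_Ropp, Rpower_1 by auto. reflexivity. }
  apply (ED_chain u (fun v => (-2*k*alpha*c) * Rpower (alpha * v + beta) (-(3/2)))).
  apply (proj1 (deriv01_ED _ _ _)), Hd; auto. apply dpow; auto.
- intros s Hs. pose proof (HDu s Hs).
  rewrite Rabs_mult, (Rabs_pos_eq ((alpha * u s + beta) ^ 2)) by (apply pow_le; lra).
  replace (3*k*alpha^2*c^2) with (2*alpha*(k*m)) by (unfold m; field).
  unfold k. rewrite sgn_abs. field. lra.
Qed.
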